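(* Let $p:E\to B$ be a finite covering map between connected manifolds, and let $f:E\to E$, $g:B\to B$ be continuous maps with $p\circ f=g\circ p$. Then: (1) $p^{-1}(\mathrm{ePer}(g))=\mathrm{ePer}(f)$; (2) $p(\mathrm{Per}(f))=\mathrm{Per}(g)$; (3) if moreover $p$ is a regular covering with (finite) group $H$ of deck transformations, and the morphism $f^{\#}:H\to H$ determined by $f\circ h=f^{\#}(h)\circ f$ for all $h\in H$ is injective, then $p^{-1}(\mathrm{Per}(g))=\mathrm{Per}(f)$.
   Context: A covering $p$ is finite if its fibers are finite, and regular if its deck transformation group acts transitively on each fiber. For a self-map $f$: $\mathrm{Per}(f)=\{x:\exists k>0, f^k(x)=x\}$, $\mathrm{ePer}(f)=\{x:\exists k>0, f^k(x)\in\mathrm{Per}(f)\}$. *)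

(* Defs.v *)
From Stdlib Require Import Reals Lra List Classical.
Open Scope R_scope.

Record Top := MkTop {
  carrier :> Type;
  is_open : (carrier -> Prop) -> Prop;
  open_full : is_open (fun _ => True);
  open_inter : forall U V, is_open U -> is_open V -> is_open (fun x => U x /\ V x);
  open_union : forall F : (carrier -> Prop) -> Prop,
      (forall U, F U -> is_open U) -> is_open (fun x => exists U, F U /\ U x)
}.

Arguments is_open {t} _.

(* f is continuous on the subset A (for the subspace topology on A) *)
Definition continuous_on {X Y : Top} (A : X -> Prop) (f : X -> Y) : Prop :=
  forall W : Y -> Prop, is_open W ->
    exists O : X -> Prop, is_open O /\
      (forall x, A x -> (O x <-> W (f x))).

Definition continuous {X Y : Top} (f : X -> Y) : Prop :=
  forall W : Y -> Prop, is_open W -> is_open (fun x => W (f x)).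

Definition connected (X : Top) : Prop :=
  inhabited X /\
  forall U V : X -> Prop, is_open U -> is_open V ->
    (forall x, U x \/ V x) -> (forall x, ~ (U x /\ V x)) ->
    (forall x, U x) \/ (forall x, V x).

Definition hausdorff (X : Top) : Prop :=
  forall x y : X, x <> y -> exists U V : X -> Prop,
    is_open U /\ is_open V /\ U x /\ V y /\ (forall z, ~ (U z /\ V z)).

Definition second_countable (X : Top) : Prop :=
  exists base : nat -> X -> Prop, (forall n, is_open (base n)) /\
    forall U : X -> Prop, is_open U -> forall x, U x ->
      exists n, base n x /\ (forall y, base n y -> U y).

(* Euclidean space R^n : real sequences vanishing from index n on,
   with the usual (product / sup-norm) topology. *)
Definition Rn (n : nat) : Type := { x : nat -> R | forall i, (n <= i)%nat -> x i = 0 }.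

Definition Rn_open (n : nat) (U : Rn n -> Prop) : Prop :=
  forall x, U x -> exists eps, eps > 0 /\
    forall y : Rn n, (forall i, (i < n)%nat -> Rabs (proj1_sig y i - proj1_sig x i) < eps) -> U y.

Lemma Rn_open_full n : Rn_open n (fun _ => True).
Proof. intros x _; exists 1; split; [lra|auto]. Qed.

Lemma Rn_open_inter n U V : Rn_open n U -> Rn_open n V -> Rn_open n (fun x => U x /\ V x).
Proof.
  intros HU HV x [Ux Vx]. destruct (HU x Ux) as [e1 [He1 H1]].
  destruct (HV x Vx) as [e2 [He2 H2]].
  exists (Rmin e1 e2); split; [apply Rmin_pos; lra|].
  intros y Hy; split; [apply H1|apply H2]; intros i Hi; specialize (Hy i Hi);
  [pose proof (Rmin_l e1 e2)|pose proof (Rmin_r e1 e2)]; lra.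
Qed.

Lemma Rn_open_union n (F : (Rn n -> Prop) -> Prop) :
  (forall U, F U -> Rn_open n U) -> Rn_open n (fun x => exists U, F U /\ U x).
Proof.
  intros HF x [U [FU Ux]]. destruct (HF U FU x Ux) as [e [He H]].
  exists e; split; auto. intros y Hy; exists U; auto.
Qed.

Definition Euclid (n : nat) : Top :=
  MkTop (Rn n) (Rn_open n) (Rn_open_full n) (Rn_open_inter n) (Rn_open_union n).

Definition locally_euclidean (X : Top) (n : nat) : Prop :=
  forall x : X, exists (U : X -> Prop) (V : Euclid n -> Prop)
    (phi : X -> Euclid n) (psi : Euclid n -> X),
    is_open U /\ U x /\ is_open V /\
    (forall y, U y -> V (phi y) /\ psi (phi y) = y) /\
    (forall z, V z -> U (psi z) /\ phi (psi z) = z) /\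
    continuous_on U phi /\ continuous_on V psi.

Definition manifold (X : Top) : Prop :=
  hausdorff X /\ second_countable X /\ exists n, locally_euclidean X n.

Definition homeo_onto {E B : Top} (p : E -> B) (V : E -> Prop) (U : B -> Prop) : Prop :=
  exists s : B -> E,
    (forall x, V x -> U (p x) /\ s (p x) = x) /\
    (forall y, U y -> V (s y) /\ p (s y) = y) /\
    continuous_on V p /\ continuous_on U s.

Definition covering_map {E B : Top} (p : E -> B) : Prop :=
  continuous p /\ (forall b, exists x, p x = b) /\
  forall b : B, exists U : B -> Prop, is_open U /\ U b /\
    exists Sheets : (E -> Prop) -> Prop,
      (forall V, Sheets V -> is_open V /\ homeo_onto p V U) /\
      (forall x, U (p x) <-> exists V, Sheets V /\ V x) /\
      (forall V W x, Sheets V -> Sheets W -> V x -> W x -> V = W).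

Definition finite_covering {E B : Top} (p : E -> B) : Prop :=
  covering_map p /\ forall b, exists l : list E, forall x, p x = b -> In x l.

Definition deck_transformation {E B : Top} (p : E -> B) (h : E -> E) : Prop :=
  exists h' : E -> E, continuous h /\ continuous h' /\
    (forall x, h' (h x) = x) /\ (forall x, h (h' x) = x) /\
    (forall x, p (h x) = p x).

Definition regular_covering {E B : Top} (p : E -> B) : Prop :=
  covering_map p /\
  forall x y, p x = p y -> exists h, deck_transformation p h /\ h x = y.

Definition Per {X : Type} (f : X -> X) (x : X) : Prop :=
  exists k, (0 < k)%nat /\ Nat.iter k f x = x.

Definition ePer {X : Type} (f : X -> X) (x : X) : Prop :=
  exists k, (0 < k)%nat /\ Per f (Nat.iter k f x).

(* Main.v *)
Require Import Defs.
From Stdlib Require Import Reals List Classical.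
From Stdlib Require Import Lia FunctionalExtensionality PropExtensionality.

Lemma iter_add {X} (f : X -> X) a b x : Nat.iter (a + b) f x = Nat.iter a f (Nat.iter b f x).
Proof. induction a; simpl; congruence. Qed.

Lemma iter_mul {X} (f : X -> X) i n x : Nat.iter i (Nat.iter n f) x = Nat.iter (i * n) f x.
Proof. induction i; simpl; auto. rewrite iter_add, IHi; auto. Qed.

Lemma iter_comm {E B : Type} (p : E -> B) f g (Hc : forall x, p (f x) = g (p x)) k x :
  p (Nat.iter k f x) = Nat.iter k g (p x).
Proof. induction k; simpl; auto. rewrite Hc, IHk; auto. Qed.

Lemma iter_fix {X} (g : X -> X) n b : Nat.iter n g b = b -> forall i, Nat.iter i (Nat.iter n g) b = b.
Proof. intros H i; induction i; simpl; auto. rewrite IHi; auto. Qed.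

Lemma pigeon {X} (u : nat -> X) (l : list X) : (forall i, In (u i) l) ->
  exists i d, (0 < d)%nat /\ u i = u (i + d)%nat.
Proof.
  intros Hin. apply NNPP; intro Hn.
  assert (Hnd : NoDup (map u (seq 0 (S (length l))))).
  { apply NoDup_map_NoDup_ForallPairs; [|apply seq_NoDup].
    intros a b _ _ Hab. destruct (Nat.lt_total a b) as [H|[H|H]]; auto.
    - exfalso; apply Hn; exists a, (b - a)%nat; split; [lia|]. now replace (a + (b - a))%nat with b by lia.
    - exfalso; apply Hn; exists b, (a - b)%nat; split; [lia|]. now replace (b + (a - b))%nat with a by lia. }
  pose proof (@NoDup_incl_length _ _ l Hnd) as HL.
  assert (Hi : incl (map u (seq 0 (S (length l)))) l).
  { intros y Hy. apply in_map_iff in Hy. destruct Hy as [i [<- _]]. apply Hin. }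
  specialize (HL Hi). rewrite length_map, length_seq in HL. lia.
Qed.

Lemma core {E B : Top} (p : E -> B) f g (Hp : finite_covering p)
  (Hc : forall x, p (f x) = g (p x)) n b y :
  Nat.iter n g b = b -> p y = b ->
  exists i d, (0 < d)%nat /\ Nat.iter i (Nat.iter n f) y = Nat.iter (i + d) (Nat.iter n f) y.
Proof.
  intros Hb Hy. destruct Hp as [_ Hfin]. destruct (Hfin b) as [l Hl].
  apply (pigeon (fun i => Nat.iter i (Nat.iter n f) y) l).
  intro i. apply Hl. rewrite iter_mul, (iter_comm p f g Hc), Hy, <- iter_mul.
  apply iter_fix; auto.
Qed.

Lemma open_local (X : Top) (S : X -> Prop) :
  (forall x, S x -> exists O, is_open O /\ O x /\ forall y, O y -> S y) -> is_open S.
Proof.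
  intro H.
  pose proof (open_union X (fun O => is_open O /\ forall y, O y -> S y) (fun U HU => proj1 HU)) as Ho.
  replace S with (fun x => exists U, (is_open U /\ forall y, U y -> S y) /\ U x); auto.
  apply functional_extensionality; intro x; apply propositional_extensionality; split.
  - intros [U [[_ HU] Ux]]; auto.
  - intro Sx; destruct (H x Sx) as [O [HO [Ox HOS]]]; exists O; auto.
Qed.

Lemma deck_fix {E B : Top} (p : E -> B) (Hp : covering_map p) (cE : connected E) h :
  deck_transformation p h -> forall z, h z = z -> forall w, h w = w.
Proof.
  intros [h' [Hh [_ [_ [_ Hph]]]]] z Hz.
  destruct Hp as [_ [_ Hcov]].
  assert (Hloc : forall w, exists O, is_open O /\ O w /\
     ((h w = w -> forall y, O y -> h y = y) /\ (h w <> w -> forall y, O y -> h y <> y))).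
  { intro w. destruct (Hcov (p w)) as [U [HU [Uw [Sh [HSh [Hcv Huniq]]]]]].
    destruct (proj1 (Hcv w) Uw) as [V [SV Vw]].
    assert (Uhw : U (p (h w))) by (rewrite Hph; auto).
    destruct (proj1 (Hcv (h w)) Uhw) as [W [SW Whw]].
    destruct (HSh V SV) as [HVo [s [Hs _]]].
    assert (Hinj : forall y, V y -> V (h y) -> h y = y).
    { intros y Vy Vhy. destruct (Hs y Vy) as [_ E1]. destruct (Hs (h y) Vhy) as [_ E2].
      rewrite Hph in E2. congruence. }
    exists (fun y => V y /\ W (h y)). split; [|split].
    - apply open_inter; auto. apply Hh. apply (HSh W SW).
    - auto.
    - split.
      + intros Hw y [Vy Wy]. assert (V = W) by (apply (Huniq V W w); auto; rewrite <- Hw; auto).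
        subst W. apply Hinj; auto.
      + intros Hw y [Vy Wy] Hy. apply Hw.
        assert (V = W) by (apply (Huniq V W y); auto; rewrite <- Hy; auto).
        subst W. apply Hinj; auto. }
  destruct cE as [_ Hconn].
  destruct (Hconn (fun w => h w = w) (fun w => h w <> w)) as [H|H].
  - apply open_local. intros x Hx. destruct (Hloc x) as [O [HO [Ox [H1 _]]]]. exists O; auto.
  - apply open_local. intros x Hx. destruct (Hloc x) as [O [HO [Ox [_ H2]]]]. exists O; auto.
  - intro x; apply classic.
  - intros x [A1 A2]; auto.
  - exact H.
  - exfalso; apply (H z Hz).
Qed.

Theorem mainTheorem9 (E B : Top) (p : E -> B) (f : E -> E) (g : B -> B)
  (HE : manifold E) (HB : manifold B) (cE : connected E) (cB : connected B)
  (Hp : finite_covering p) (Hf : continuous f) (Hg : continuous g)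
  (Hcomm : forall x, p (f x) = g (p x)) :
  (forall x, ePer g (p x) <-> ePer f x) /\
  (forall b, Per g b <-> exists x, Per f x /\ p x = b) /\
  (regular_covering p ->
   forall fsharp : (E -> E) -> (E -> E),
     (forall h, deck_transformation p h ->
        deck_transformation p (fsharp h) /\ (forall x, f (h x) = fsharp h (f x))) ->
     (forall h1 h2, deck_transformation p h1 -> deck_transformation p h2 ->
        fsharp h1 = fsharp h2 -> h1 = h2) ->
     forall x, Per g (p x) <-> Per f x).
Proof.
  pose proof (iter_comm p f g Hcomm) as Hic.
  assert (PerL : forall x, Per f x -> Per g (p x)).
  { intros x [m [Hm Hx]]. exists m; split; auto. rewrite <- Hic, Hx; auto. }
  assert (PerC : forall n i d y, (0 < n)%nat -> (0 < d)%nat ->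
     Nat.iter i (Nat.iter n f) y = Nat.iter (i + d) (Nat.iter n f) y ->
     Per f (Nat.iter i (Nat.iter n f) y)).
  { intros n i d y Hn Hd Heq. exists (d * n)%nat; split; [lia|].
    rewrite <- iter_mul, <- iter_add. rewrite Nat.add_comm. auto. }
  split; [|split].
  - intro x; split.
    + intros [k [Hk [m [Hm Hper]]]].
      rewrite <- Hic in Hper.
      destruct (core p f g Hp Hcomm m _ (Nat.iter k f x) Hper eq_refl) as [i [d [Hd Heq]]].
      exists (i * m + k)%nat; split; [lia|].
      rewrite iter_add, <- iter_mul. eapply PerC; eauto.
    + intros [k [Hk Hper]]. exists k; split; auto. rewrite <- Hic. apply PerL; auto.
  - intro b; split.
    + intros [n [Hn Hb]]. assert (Hsurj := proj1 (proj2 (proj1 Hp))).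
      destruct (Hsurj b) as [x0 Hx0].
      destruct (core p f g Hp Hcomm n b x0 Hb Hx0) as [i [d [Hd Heq]]].
      exists (Nat.iter i (Nat.iter n f) x0). split; [eapply PerC; eauto|].
      rewrite iter_mul, Hic, Hx0, <- iter_mul. apply iter_fix; auto.
    + intros [x [Hx <-]]. apply PerL; auto.
  - intros Hreg fsharp Hfs Hinjf x. split; [|apply PerL].
    intros [n [Hn Hb]].
    set (b := p x) in *.
    set (T := Nat.iter n f).
    assert (Hit : forall k h, deck_transformation p h ->
       deck_transformation p (Nat.iter k fsharp h) /\
       forall z, Nat.iter k f (h z) = Nat.iter k fsharp h (Nat.iter k f z)).
    { induction k; intros h Hh; simpl; [split; auto|].
      destruct (IHk h Hh) as [D1 C1]. destruct (Hfs _ D1) as [D2 C2]. split; auto.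
      intro z. rewrite C1, C2. auto. }
    assert (Hid : deck_transformation p (fun z => z)).
    { exists (fun z => z). repeat split; auto; intros W HW; exact HW. }
    assert (Hcov : covering_map p) by (destruct Hp; auto).
    assert (Hfid : fsharp (fun z => z) = (fun z => z)).
    { destruct (Hfs _ Hid) as [D C]. apply functional_extensionality.
      intro w. apply (deck_fix p Hcov cE _ D (f x)). symmetry; exact (C x). }
    assert (Hitid : forall k, Nat.iter k fsharp (fun z => z) = (fun z => z)).
    { induction k; simpl; auto. rewrite IHk; auto. }
    assert (Hitinj : forall k h1 h2, deck_transformation p h1 -> deck_transformation p h2 ->
       Nat.iter k fsharp h1 = Nat.iter k fsharp h2 -> h1 = h2).
    { induction k; simpl; auto. intros h1 h2 D1 D2 Heq. apply IHk; auto.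
      apply Hinjf; auto; apply Hit; auto. }
    assert (Tinj : forall y1 y2, p y1 = b -> p y2 = b -> T y1 = T y2 -> y1 = y2).
    { intros y1 y2 H1 H2 HT. destruct Hreg as [_ Hr].
      destruct (Hr y1 y2 ltac:(congruence)) as [h [Dh Hy]].
      destruct (Hit n h Dh) as [Dn Cn].
      assert (Hfx : Nat.iter n fsharp h (T y1) = T y1).
      { unfold T. rewrite <- Cn, Hy. auto. }
      assert (Hall := deck_fix p Hcov cE _ Dn _ Hfx).
      assert (Nat.iter n fsharp h = Nat.iter n fsharp (fun z => z)).
      { rewrite Hitid. apply functional_extensionality; auto. }
      assert (h = fun z => z) by (apply (Hitinj n); auto).
      subst h. auto. }
    assert (Hfib : forall j, p (Nat.iter j T x) = b).
    { intro j. unfold T. rewrite iter_mul, Hic, <- iter_mul. apply iter_fix; auto. }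
    destruct (core p f g Hp Hcomm n b x Hb eq_refl) as [i [d [Hd Heq]]].
    fold T in Heq.
    assert (Hcan : forall i0, Nat.iter i0 T x = Nat.iter (i0 + d) T x -> x = Nat.iter d T x).
    { induction i0; simpl; [auto|]. intro H. apply IHi0. apply Tinj; auto. }
    specialize (Hcan i Heq).
    exists (d * n)%nat; split; [lia|]. rewrite <- iter_mul. symmetry; auto.
Qed.
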